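(* Let $A$ be a finite set of atoms, and let $t,s$ be nominal terms of the same sort and $\nabla$ a freshness context, all based on $A$. If $\{X:t\triangleq s\};\emptyset;\emptyset;\varepsilon\Longrightarrow^{+}\emptyset;S;\Gamma;\sigma$ is a derivation of the algorithm $\mathfrak N$ (with parameters $A$ and $\nabla$, $X$ a fresh variable), then $\langle\Gamma,X\sigma\rangle$ is an $A$-based generalization of $\langle\nabla,t\rangle$ and $\langle\nabla,s\rangle$.
   Context: Nominal terms $t::=f(t_1,\dots,t_n)\mid a\mid a.t\mid \pi\cdot X$ over sorted atoms, variables and function symbols; $\pi$ is a permutation (finite sequence of swappings $(a\,b)$ of same-sorted atoms; $\mathit{Id}$ the empty one, $\pi^{-1}$ the reversed sequence); $\pi\bullet t$ is the swapping action ($(a\,b)$ exchanges $a,b$ everywhere, $(a\,b)\bullet(\pi\cdot X)=((a\,b)\pi)\cdot X$, sequences act right to left); a permutation denotes a bijection on atoms. $\mathrm{Atoms}(\cdot)$ is the set of atoms occurring. Substitutions map variables to terms of the same sort, application $t\sigma$ allows atom capture and $(\pi\cdot X)\sigma=\pi\bullet(X\sigma)$; $\sigma\vartheta$ is composition (first $\sigma$), $\varepsilon$ the identity. A freshness context is a finite set of constraints $a\# X$. Judgments: $\nabla\vdash a\approx a$; $\nabla\vdash a.t\approx a.t'$ if $\nabla\vdash t\approx t'$; $\nabla\vdash a.t\approx a'.t'$ if $a\neq a'$, $\nabla\vdash t\approx(a\,a')\bullet t'$ and $\nabla\vdash a\# t'$; $\nabla\vdash\pi\cdot X\approx\pi'\cdot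 X$ if $a\# X\in\nabla$ for all $a$ with $\pi\bullet a\neq\pi'\bullet a$; applications componentwise; $\nabla\vdash a\# a'$ if $a\ne a'$; $\nabla\vdash a\#\pi\cdot X$ if $\pi^{-1}\bullet a\# X\in\nabla$; $a\#$ distributes over applications; $\nabla\vdash a\# a.t$; $\nabla\vdash a\# a'.t$ if $a\ne a'$ and $\nabla\vdash a\# t$. ${\sf FC}(F)$ for a finite set $F$ of formulas $a\# t$: starting from $F;\emptyset$ apply as long as possible $\{a\# b\}\uplus F';\Delta\Rightarrow F';\Delta$ ($a\neq b$); $\{a\# a.t\}\uplus F';\Delta\Rightarrow F';\Delta$; $\{a\# b.t\}\uplus F';\Delta\Rightarrow\{a\# t\}\cup F';\Delta$ ($a\neq b$); $\{a\# f(t_1,..,t_n)\}\uplus F';\Delta\Rightarrow\{a\# t_1,..,a\# t_n\}\cup F';\Delta$; $\{a\#\pi\cdot X\}\uplus F';\Delta\Rightarrow F';\{\pi^{-1}\bullet a\# X\}\cup\Delta$; result $\Delta$ if the terminal state is $\emptyset;\Delta$, $\bot$ if it contains some $a\# a$. $\nabla\sigma:={\sf FC}(\{a\# X\sigma\mid a\# X\in\nabla\})$. $\sigma$ respects $\nabla$ if for each $X$ no $a$ with $a\# X\in\nabla$ occurs free in $X\sigma$ outside suspensions. A term-in-context is $\langle\nabla,t\rangle$; $\langle\nabla_1,t_1\rangle\preceq\langle\nabla_2,t_2\rangle$ iff some $\sigma$ respecting $\nabla_1$ has $\nabla_1\sigma\subseteq\nabla_2$ and $\nabla_2\vdash t_1\sigma\approx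 t_2$. A generalization of $p_1,p_2$ is $p$ with $p\preceq p_1$, $p\preceq p_2$. A term/freshness context is $A$-based if all its atoms lie in $A$; a term-in-context is $A$-based if both components are; an $A$-based generalization is a generalization that is $A$-based. Algorithm $\mathfrak N$ (parameters: finite atom set $A$, $A$-based freshness context $\nabla$). An AUT is $X:t\triangleq s$ ($X$ a generalization variable of the sort of $t,s$). States are $P;S;\Gamma;\sigma$ with $P,S$ sets of AUTs (each generalization variable occurring only once in $P\cup S$), $\Gamma$ a freshness context, $\sigma$ a substitution. Rules: Dec: $\{X:h(t_1,..,t_m)\triangleq h(s_1,..,s_m)\}\uplus P;S;\Gamma;\sigma\Rightarrow\{Y_1:t_1\triangleq s_1,..,Y_m:t_m\triangleq s_m\}\cup P;S;\Gamma;\sigma\{X\mapsto h(Y_1,..,Y_m)\}$, $h$ a function symbol or an atom ($m\ge0$), $Y_i$ fresh. Abs: $\{X:a.t\triangleq b.s\}\uplus P;S;\Gamma;\sigma\Rightarrow\{Y:(c\,a)\bullet t\triangleq(c\,b)\bullet s\}\cup P;S;\Gamma;\sigma\{X\mapsto c.Y\}$, $Y$ fresh, $c\in A$ with $\nabla\vdash c\# a.t$ and $\nabla\vdash c\# b.s$. Sol: $\{X:t\triangleq s\}\uplus P;S;\Gamma;\sigma\Rightarrow P;S\cup\{X:t\triangleq s\};\Gamma\cup\Gamma';\sigma$ where $\Gamma'=\{a\# X\mid a\in A,\nabla\vdash a\# t,\nabla\vdash a\# s\}$, applicable only when Dec and Abs do not apply to this AUT, i.e. (a) $t,s$ have distinct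 heads (head of $f(\dots)$ is $f$, of $a$ is $a$, of an abstraction is the abstraction symbol, of $\pi\cdot X$ is $X$), or (b) both are suspensions, or (c) both are abstractions $a.t',b.s'$ with no $c\in A$ satisfying $\nabla\vdash c\# a.t'$ and $\nabla\vdash c\# b.s'$. Mer: $P;\{X:t_1\triangleq s_1,Y:t_2\triangleq s_2\}\uplus S;\Gamma;\sigma\Rightarrow P;\{X:t_1\triangleq s_1\}\cup S;\Gamma\{Y\mapsto\pi\cdot X\};\sigma\{Y\mapsto\pi\cdot X\}$, where $\pi$ is an $\mathrm{Atoms}(t_1,s_1,t_2,s_2)$-based permutation with $\nabla\vdash\pi\bullet t_1\approx t_2$ and $\nabla\vdash\pi\bullet s_1\approx s_2$. *)

(* Defs.v *)
From Stdlib Require Import List Arith Permutation Relations.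
Import ListNotations.
Set Implicit Arguments.

Inductive sort : Type :=
| SAtm (nu : nat)
| SBase (d : nat)
| SAbs (nu : nat) (s : sort).

Definition sort_eq_dec : forall x y : sort, {x = y} + {x <> y}.
Proof. decide equality; apply Nat.eq_dec. Defined.

Record Atom := mkAtom { anm : nat; asrt : nat }.
Definition atom_eq_dec : forall x y : Atom, {x = y} + {x <> y}.
Proof. decide equality; apply Nat.eq_dec. Defined.

Record Var := mkVar { vnm : nat; vsrt : sort }.
Definition var_eq_dec : forall x y : Var, {x = y} + {x <> y}.
Proof. decide equality; [apply sort_eq_dec | apply Nat.eq_dec]. Defined.

Record FSym := mkFSym { fnm : nat; fdom : list sort; fcod : sort }.

(* a permutation is a finite sequence of swappings; sequences act right to left *)
Definition perm := list (Atom * Atom).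

Definition swap_atom (sw : Atom * Atom) (c : Atom) : Atom :=
  let (a, b) := sw in
  if atom_eq_dec c a then b else if atom_eq_dec c b then a else c.

Definition patom (p : perm) (c : Atom) : Atom := fold_right swap_atom c p.

Definition pinv (p : perm) : perm := rev p.

Definition perm_ok (p : perm) : bool :=
  forallb (fun sw => Nat.eqb (asrt (fst sw)) (asrt (snd sw))) p.

Definition perm_atoms (p : perm) : list Atom :=
  flat_map (fun sw => [fst sw; snd sw]) p.

Inductive term : Type :=
| App (f : FSym) (ts : list term)
| At (a : Atom)
| Abs (a : Atom) (t : term)
| Susp (p : perm) (X : Var).

Fixpoint pact (p : perm) (t : term) : term :=
  match t with
  | App f ts => App f (map (pact p) ts)
  | At a => At (patom p a)
  | Abs a u => Abs (patom p a) (pact p u)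
  | Susp q X => Susp (p ++ q) X
  end.

Fixpoint atoms (t : term) : list Atom :=
  match t with
  | App f ts => concat (map atoms ts)
  | At a => [a]
  | Abs a u => a :: atoms u
  | Susp p X => perm_atoms p
  end.

Fixpoint tvars (t : term) : list Var :=
  match t with
  | App f ts => concat (map tvars ts)
  | At a => []
  | Abs a u => tvars u
  | Susp p X => [X]
  end.

Fixpoint free_atoms_ns (t : term) : list Atom :=
  match t with
  | App f ts => concat (map free_atoms_ns ts)
  | At a => [a]
  | Abs a u => filter (fun b => if atom_eq_dec a b then false else true)
                      (free_atoms_ns u)
  | Susp p X => []
  end.

Fixpoint sorts_match (l : list (option sort)) (ds : list sort) : bool :=
  match l, ds with
  | [], [] => true
  | Some s :: l', d :: ds' =>
      if sort_eq_dec s d then sorts_match l' ds' else false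
  | _, _ => false
  end.

Fixpoint wsort (t : term) : option sort :=
  match t with
  | App f ts => if sorts_match (map wsort ts) (fdom f) then Some (fcod f) else None
  | At a => Some (SAtm (asrt a))
  | Abs a u => match wsort u with
               | Some d => Some (SAbs (asrt a) d)
               | None => None
               end
  | Susp p X => if perm_ok p then Some (vsrt X) else None
  end.

Definition subst := Var -> term.

Fixpoint apply_subst (sg : subst) (t : term) : term :=
  match t with
  | App f ts => App f (map (apply_subst sg) ts)
  | At a => At a
  | Abs a u => Abs a (apply_subst sg u)
  | Susp p X => pact p (sg X)
  end.

Definition id_subst : subst := fun X => Susp [] X.

(* composition: first sg, then th *)
Definition compose (sg th : subst) : subst := fun X => apply_subst th (sg X).

Definition single (X : Var) (t : term) : subst :=
  fun Z => if var_eq_dec Z X then t else Susp [] Z.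

Definition sort_preserving (sg : subst) : Prop :=
  forall X, wsort (sg X) = Some (vsrt X).

Definition fctx := list (Atom * Var).

Fixpoint fresh (D : fctx) (a : Atom) (t : term) : Prop :=
  match t with
  | App f ts => (fix go (l : list term) : Prop :=
                   match l with
                   | [] => True
                   | u :: l' => fresh D a u /\ go l'
                   end) ts
  | At b => a <> b
  | Abs b u => a = b \/ (a <> b /\ fresh D a u)
  | Susp p X => In (patom (pinv p) a, X) D
  end.

Inductive aeq (D : fctx) : term -> term -> Prop :=
| aeq_atom : forall a, aeq D (At a) (At a)
| aeq_abs_same : forall a t t', aeq D t t' -> aeq D (Abs a t) (Abs a t')
| aeq_abs_diff : forall a a' t t', a <> a' ->
    aeq D t (pact [(a, a')] t') -> fresh D a t' -> aeq D (Abs a t) (Abs a' t')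
| aeq_susp : forall p p' X,
    (forall a, patom p a <> patom p' a -> In (a, X) D) ->
    aeq D (Susp p X) (Susp p' X)
| aeq_app : forall f ts ts', Forall2 (aeq D) ts ts' -> aeq D (App f ts) (App f ts').

(* The procedure FC, computed: Some Delta, or None for bottom. *)
Fixpoint fc1 (a : Atom) (t : term) : option fctx :=
  match t with
  | App f ts => (fix go (l : list term) : option fctx :=
                   match l with
                   | [] => Some []
                   | u :: l' => match fc1 a u, go l' with
                                | Some d1, Some d2 => Some (d1 ++ d2)
                                | _, _ => None
                                end
                   end) ts
  | At b => if atom_eq_dec a b then None else Some []
  | Abs b u => if atom_eq_dec a b then Some [] else fc1 a u
  | Susp p X => Some [(patom (pinv p) a, X)]
  end.

Fixpoint FC (F : list (Atom * term)) : option fctx :=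
  match F with
  | [] => Some []
  | (a, t) :: F' => match fc1 a t, FC F' with
                    | Some d1, Some d2 => Some (d1 ++ d2)
                    | _, _ => None
                    end
  end.

Definition ctx_subst (D : fctx) (sg : subst) : option fctx :=
  FC (map (fun c => (fst c, sg (snd c))) D).

Definition respects (sg : subst) (D : fctx) : Prop :=
  forall a X, In (a, X) D -> ~ In a (free_atoms_ns (sg X)).

Definition preceq (D1 : fctx) (t1 : term) (D2 : fctx) (t2 : term) : Prop :=
  exists sg : subst,
    sort_preserving sg /\ respects sg D1 /\
    (exists D, ctx_subst D1 sg = Some D /\ incl D D2) /\
    aeq D2 (apply_subst sg t1) t2.

Definition term_based (A : list Atom) (t : term) : Prop := incl (atoms t) A.
Definition ctx_based (A : list Atom) (D : fctx) : Prop :=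
  forall a X, In (a, X) D -> In a A.

Definition A_based_generalization (A : list Atom) (G : fctx) (r : term)
  (D1 : fctx) (t1 : term) (D2 : fctx) (t2 : term) : Prop :=
  ctx_based A G /\ term_based A r /\ preceq G r D1 t1 /\ preceq G r D2 t2.

Definition aut := (Var * term * term)%type.

Record state := mkState { stP : list aut; stS : list aut; stG : fctx; stsig : subst }.

Definition aut_vars (l : list aut) : list Var :=
  flat_map (fun x => match x with (Z, t, s) => Z :: tvars t ++ tvars s end) l.

(* Y is a fresh variable w.r.t. the initial problem (vars listed in U, which
   contains the initial generalization variable X0) and the current state. *)
Definition fresh_var (U : list Var) (X0 : Var) (st : state) (Y : Var) : Prop :=
  ~ In Y U /\ ~ In Y (aut_vars (stP st ++ stS st)) /\ ~ In Y (map snd (stG st)) /\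
  stsig st Y = Susp [] Y /\ ~ In Y (tvars (stsig st X0)).

Inductive head := HF (f : FSym) | HA (a : Atom) | HAbs | HV (X : Var).
Definition head_of (t : term) : head :=
  match t with
  | App f _ => HF f
  | At a => HA a
  | Abs _ _ => HAbs
  | Susp _ X => HV X
  end.

Definition is_susp (t : term) : Prop := exists p X, t = Susp p X.

Definition abs_atom (A : list Atom) (D : fctx) (a : Atom) (t : term)
  (b : Atom) (s : term) (c : Atom) : Prop :=
  In c A /\ asrt c = asrt a /\ asrt c = asrt b /\
  fresh D c (Abs a t) /\ fresh D c (Abs b s).

Definition sol_applicable (A : list Atom) (D : fctx) (t s : term) : Prop :=
  head_of t <> head_of s \/
  (is_susp t /\ is_susp s) \/
  (exists a t' b s', t = Abs a t' /\ s = Abs b s' /\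
     ~ (exists c, abs_atom A D a t' b s' c)).

Definition mk_auts (Ys : list Var) (ts ss : list term) : list aut :=
  map (fun x => match x with (Y, (t, s)) => (Y, t, s) end) (combine Ys (combine ts ss)).

Inductive step (A : list Atom) (D : fctx) (U : list Var) (X0 : Var) :
  state -> state -> Prop :=
| Dec_app : forall P P' S G sg X f ts ss Ys,
    Permutation P ((X, App f ts, App f ss) :: P') ->
    length ts = length ss -> length Ys = length ts -> NoDup Ys ->
    Forall (fresh_var U X0 (mkState P S G sg)) Ys ->
    Forall2 (fun Y t => wsort t = Some (vsrt Y)) Ys ts ->
    step A D U X0 (mkState P S G sg)
      (mkState (mk_auts Ys ts ss ++ P') S G
         (compose sg (single X (App f (map (fun Y => Susp [] Y) Ys)))))
| Dec_atom : forall P P' S G sg X a,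
    Permutation P ((X, At a, At a) :: P') ->
    step A D U X0 (mkState P S G sg)
      (mkState P' S G (compose sg (single X (At a))))
| Abs_rule : forall P P' S G sg X a t b s c Y,
    Permutation P ((X, Abs a t, Abs b s) :: P') ->
    abs_atom A D a t b s c ->
    fresh_var U X0 (mkState P S G sg) Y ->
    wsort (pact [(c, a)] t) = Some (vsrt Y) ->
    step A D U X0 (mkState P S G sg)
      (mkState ((Y, pact [(c, a)] t, pact [(c, b)] s) :: P') S G
         (compose sg (single X (Abs c (Susp [] Y)))))
| Sol : forall P P' S G G' sg X t s,
    Permutation P ((X, t, s) :: P') ->
    sol_applicable A D t s ->
    (forall b Z, In (b, Z) G' <-> Z = X /\ In b A /\ fresh D b t /\ fresh D b s) ->
    step A D U X0 (mkState P S G sg)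
      (mkState P' (S ++ [(X, t, s)]) (G ++ G') sg)
| Mer : forall P S S' G G' sg X t1 s1 Y t2 s2 (pi : perm),
    Permutation S ((X, t1, s1) :: (Y, t2, s2) :: S') ->
    perm_ok pi = true ->
    incl (perm_atoms pi) (atoms t1 ++ atoms s1 ++ atoms t2 ++ atoms s2) ->
    aeq D (pact pi t1) t2 -> aeq D (pact pi s1) s2 ->
    ctx_subst G (single Y (Susp pi X)) = Some G' ->
    step A D U X0 (mkState P S G sg)
      (mkState P ((X, t1, s1) :: S') G' (compose sg (single Y (Susp pi X)))).

Definition ctx_vars (D : fctx) : list Var := map snd D.

(* Main.v *)
Require Import Defs.
From Stdlib Require Import List Relations Permutation Lia.
Import ListNotations.

Lemma swap_inv : forall sw c, swap_atom sw (swap_atom sw c) = c.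
Proof.
  intros [a b] c; unfold swap_atom.
  destruct (atom_eq_dec c a); subst.
  - destruct (atom_eq_dec b a); subst; auto. destruct (atom_eq_dec b b); congruence.
  - destruct (atom_eq_dec c b); subst.
    + destruct (atom_eq_dec a a); congruence.
    + destruct (atom_eq_dec c a); [congruence|]. destruct (atom_eq_dec c b); congruence.
Qed.

Lemma patom_app : forall p q a, patom (p ++ q) a = patom p (patom q a).
Proof. intros; unfold patom; rewrite fold_right_app; auto. Qed.

Lemma patom_nil : forall a, patom [] a = a.
Proof. reflexivity. Qed.

Lemma patom_cons : forall x p a, patom (x :: p) a = swap_atom x (patom p a).
Proof. reflexivity. Qed.

Lemma patom_inv_l : forall p a, patom (rev p) (patom p a) = a.
Proof.
  induction p; intros; simpl; auto.
  rewrite patom_app, patom_cons, patom_nil, swap_inv; auto.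
Qed.

Lemma patom_inv_r : forall p a, patom p (patom (rev p) a) = a.
Proof.
  induction p; intros; simpl; auto.
  rewrite patom_app, patom_cons, IHp, patom_nil, swap_inv; auto.
Qed.

Lemma patom_inj : forall p a b, patom p a = patom p b -> a = b.
Proof.
  intros. rewrite <- (patom_inv_l p a), <- (patom_inv_l p b), H; auto.
Qed.

Definition peq (p q : perm) := forall a, patom p a = patom q a.

Lemma peq_rev : forall p q, peq p q -> peq (rev p) (rev q).
Proof.
  unfold peq; intros. apply (patom_inj q). rewrite patom_inv_r, <- H, patom_inv_r; auto.
Qed.

Lemma swap_equiv : forall p a b c,
  patom p (swap_atom (a, b) c) = swap_atom (patom p a, patom p b) (patom p c).
Proof.
  intros. unfold swap_atom.
  destruct (atom_eq_dec c a); subst.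
  - destruct (atom_eq_dec (patom p a) (patom p a)); congruence.
  - destruct (atom_eq_dec (patom p c) (patom p a)) as [E|].
    { apply patom_inj in E; congruence. }
    destruct (atom_eq_dec c b); subst.
    + destruct (atom_eq_dec (patom p b) (patom p b)); congruence.
    + destruct (atom_eq_dec (patom p c) (patom p b)) as [E|]; auto.
      apply patom_inj in E; congruence.
Qed.

Section TI.
Variable P : term -> Prop.
Hypothesis HApp : forall f ts, Forall P ts -> P (App f ts).
Hypothesis HAt : forall a, P (At a).
Hypothesis HAbs : forall a t, P t -> P (Abs a t).
Hypothesis HSusp : forall p X, P (Susp p X).
Fixpoint term_ind' (t : term) : P t :=
  match t with
  | App f ts => HApp f ts ((fix go (l : list term) : Forall P l :=
                  match l with
                  | [] => Forall_nil P
                  | u :: l' => Forall_cons u (term_ind' u) (go l')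
                  end) ts)
  | At a => HAt a
  | Abs a u => HAbs a u (term_ind' u)
  | Susp p X => HSusp p X
  end.
End TI.

Lemma pact_nil : forall t, pact [] t = t.
Proof.
  induction t using term_ind'; simpl; auto.
  - f_equal. induction H; simpl; auto. rewrite H, IHForall; auto.
  - rewrite IHt; auto.
Qed.

Lemma pact_app : forall p q t, pact p (pact q t) = pact (p ++ q) t.
Proof.
  intros p q t; induction t using term_ind'; simpl; auto.
  - f_equal. rewrite map_map. induction H; simpl; auto. rewrite H, IHForall; auto.
  - rewrite patom_app; auto.
  - rewrite patom_app, IHt; auto.
  - rewrite app_assoc; auto.
Qed.

Lemma fresh_app : forall D a f ts, fresh D a (App f ts) <-> Forall (fresh D a) ts.
Proof.
  intros. induction ts; simpl.
  - split; auto.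
  - simpl in IHts. rewrite IHts. split; intros H.
    + destruct H; constructor; auto.
    + inversion H; subst; auto.
Qed.

Lemma fresh_pact : forall D p t a, fresh D a (pact p t) <-> fresh D (patom (pinv p) a) t.
Proof.
  intros D p t; unfold pinv; induction t using term_ind'; intros b.
  - simpl pact. rewrite !fresh_app. rewrite Forall_map.
    rewrite Forall_forall in H.
    split; intro H1; rewrite Forall_forall in *; intros x Hx;
      specialize (H x Hx b); specialize (H1 x Hx); tauto.
  - simpl. split; intros H1 E.
    + subst. rewrite patom_inv_r in H1; auto.
    + subst. rewrite patom_inv_l in H1; auto.
  - simpl. rewrite IHt. split; intros [E|[E1 E2]].
    + left; subst; apply patom_inv_l.
    + right; split; auto. intro E; subst; rewrite patom_inv_r in E1; auto.
    + left; subst; symmetry; apply patom_inv_r.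
    + right; split; auto. intro E; subst; rewrite patom_inv_l in E1; auto.
  - simpl. unfold pinv. rewrite rev_app_distr, patom_app. tauto.
Qed.

Lemma fresh_peq : forall D p q t a, peq p q -> fresh D a (pact p t) -> fresh D a (pact q t).
Proof.
  intros. rewrite fresh_pact in *. unfold pinv. rewrite <- (peq_rev _ _ H a). auto.
Qed.

Section AI.
Variable D : fctx.
Variable P : term -> term -> Prop.
Hypothesis Hat : forall a, P (At a) (At a).
Hypothesis Hsame : forall a t t', aeq D t t' -> P t t' -> P (Abs a t) (Abs a t').
Hypothesis Hdiff : forall a a' t t', a <> a' -> aeq D t (pact [(a, a')] t') ->
   P t (pact [(a, a')] t') -> fresh D a t' -> P (Abs a t) (Abs a' t').
Hypothesis Hsusp : forall p p' X,
    (forall a, patom p a <> patom p' a -> In (a, X) D) -> P (Susp p X) (Susp p' X).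
Hypothesis Happ : forall f ts ts', Forall2 (fun x y => aeq D x y /\ P x y) ts ts' ->
   P (App f ts) (App f ts').
Fixpoint aeq_ind' t t' (H : aeq D t t') {struct H} : P t t'.
Proof.
  destruct H.
  - apply Hat.
  - apply Hsame; auto.
  - apply Hdiff; auto.
  - apply Hsusp; auto.
  - apply Happ. induction H; constructor; auto.
Qed.
End AI.

Lemma aeq_refl : forall D t, aeq D t t.
Proof.
  intros D t; induction t using term_ind'; constructor; auto.
  - induction H; constructor; auto.
  - intros; congruence.
Qed.

Lemma aeq_peq_r : forall D u w, aeq D u w -> forall p q v, w = pact p v -> peq p q -> aeq D u (pact q v).
Proof.
  intros D u w H. induction H using aeq_ind'; intros p0 q v Ew Hpq.
  - destruct v; simpl in Ew; try discriminate. injection Ew; intros; subst.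
    simpl; rewrite <- Hpq; constructor.
  - destruct v; simpl in Ew; try discriminate. injection Ew; intros; subst.
    simpl; rewrite <- Hpq; constructor. eapply IHaeq; eauto.
  - destruct v; simpl in Ew; try discriminate. injection Ew; intros; subst.
    simpl; rewrite <- Hpq. apply aeq_abs_diff; auto.
    + rewrite pact_app. apply (IHaeq ([(a, patom p0 a0)] ++ p0)).
      * rewrite pact_app; auto.
      * intro c. rewrite !patom_app, (Hpq c); auto.
    + eapply fresh_peq; eauto.
  - destruct v; simpl in Ew; try discriminate. injection Ew; intros; subst.
    simpl. constructor. intros c Hc. apply H. rewrite patom_app in *. rewrite Hpq; auto.
  - destruct v; simpl in Ew; try discriminate. injection Ew; intros; subst.
    simpl. constructor. clear Ew. revert ts0 H. induction ts as [|x ts IH]; intros ts0 H; destruct ts0; simpl in *; inversion H; subst; constructor.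
    + destruct H3. eapply H1; eauto.
    + apply IH; auto.
Qed.

Lemma aeq_peq_l : forall D w u, aeq D w u -> forall p q v, w = pact p v -> peq p q -> aeq D (pact q v) u.
Proof.
  intros D w u H. induction H using aeq_ind'; intros p0 q v Ew Hpq.
  - destruct v; simpl in Ew; try discriminate. injection Ew; intros; subst.
    simpl; rewrite <- Hpq; constructor.
  - destruct v; simpl in Ew; try discriminate. injection Ew; intros; subst.
    simpl; rewrite <- Hpq; constructor. eapply IHaeq; eauto.
  - destruct v; simpl in Ew; try discriminate. injection Ew; intros; subst.
    simpl; rewrite <- Hpq. apply aeq_abs_diff; auto.
    eapply IHaeq; eauto.
  - destruct v; simpl in Ew; try discriminate. injection Ew; intros; subst.
    simpl. constructor. intros c Hc. apply H. rewrite patom_app in *. rewrite Hpq; auto.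
  - destruct v; simpl in Ew; try discriminate. injection Ew; intros; subst.
    simpl. constructor. clear Ew. revert ts' H. induction ts0 as [|x ts0 IH]; intros ts' H; destruct ts'; simpl in *; inversion H; subst; constructor.
    + destruct H3. eapply H1; eauto.
    + apply IH; auto.
Qed.

Lemma aeq_equiv : forall D t t', aeq D t t' -> forall p, aeq D (pact p t) (pact p t').
Proof.
  intros D t t' H. induction H using aeq_ind'; intros r; simpl.
  - constructor.
  - constructor; auto.
  - apply aeq_abs_diff.
    + intro E; apply patom_inj in E; auto.
    + rewrite pact_app. eapply aeq_peq_r. apply (IHaeq r). rewrite pact_app; reflexivity.
      intro c. rewrite !patom_app, !patom_cons, !patom_nil. apply swap_equiv.
    + rewrite fresh_pact. unfold pinv. rewrite patom_inv_l. auto.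
  - constructor. intros c Hc. apply H. rewrite !patom_app in Hc. intro E; rewrite E in Hc; auto.
  - constructor. induction H; simpl; constructor; auto. destruct H; auto.
Qed.

Lemma fresh_aeq : forall D t t', aeq D t t' -> forall a, fresh D a t -> fresh D a t'.
Proof.
  intros D t t' H. induction H using aeq_ind'; intros b Hb; simpl in *; auto.
  - destruct Hb as [E|[E1 E2]]; auto.
  - destruct Hb as [E|[E1 E2]].
    + subst. right; auto.
    + apply IHaeq in E2. rewrite fresh_pact in E2. simpl in E2.
      destruct (atom_eq_dec b a'); [left; auto|right; split; auto].
      destruct (atom_eq_dec b a); [congruence|]. auto.
  - unfold pinv in *. destruct (atom_eq_dec (patom p (patom (rev p') b)) b) as [E|E].
    + assert (patom (rev p') b = patom (rev p) b) as E2 by (rewrite <- E at 2; rewrite patom_inv_l; auto).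
      rewrite E2; auto.
    + apply H. rewrite patom_inv_r. auto.
  - change (fresh D b (App f ts)) in Hb; change (fresh D b (App f ts')).
    rewrite fresh_app in *. induction H; inversion Hb; subst; constructor; auto.
    destruct H; auto.
Qed.

Lemma swap_sym : forall a b c, swap_atom (a, b) c = swap_atom (b, a) c.
Proof.
  intros; unfold swap_atom.
  destruct (atom_eq_dec c a), (atom_eq_dec c b); subst; auto.
Qed.

Lemma swap_l : forall a b, swap_atom (a, b) a = b.
Proof. intros; unfold swap_atom; destruct (atom_eq_dec a a); congruence. Qed.
Lemma swap_r : forall a b, swap_atom (a, b) b = a.
Proof. intros; unfold swap_atom; destruct (atom_eq_dec b a); subst; auto. destruct (atom_eq_dec b b); congruence. Qed.
Lemma swap_o : forall a b c, c <> a -> c <> b -> swap_atom (a, b) c = c.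
Proof. intros; unfold swap_atom; destruct (atom_eq_dec c a); [congruence|]; destruct (atom_eq_dec c b); congruence. Qed.

Lemma patom_one : forall x c, patom [x] c = swap_atom x c.
Proof. reflexivity. Qed.

Lemma fresh_swap : forall D a b c t, fresh D c (pact [(a, b)] t) <-> fresh D (swap_atom (a,b) c) t.
Proof. intros. rewrite fresh_pact. unfold pinv. simpl rev. rewrite patom_one. tauto. Qed.

Lemma aeq_sym : forall D t t', aeq D t t' -> aeq D t' t.
Proof.
  intros D t t' H. induction H using aeq_ind'.
  - constructor.
  - constructor; auto.
  - apply aeq_abs_diff; auto.
    + pose proof (aeq_equiv _ _ _ IHaeq [(a, a')]) as E. rewrite pact_app in E.
      eapply aeq_peq_l in E; [| reflexivity | ].
      2:{ instantiate (1 := []). intro c. simpl app. rewrite patom_cons, patom_one, swap_inv. reflexivity. }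
      rewrite pact_nil in E. eapply aeq_peq_r; [exact E| reflexivity|].
      intro c. rewrite !patom_one. apply swap_sym.
    + eapply fresh_aeq; [exact IHaeq|]. rewrite fresh_swap. rewrite swap_r. auto.
  - constructor. intros c Hc. apply H. auto.
  - constructor. induction H; constructor; destruct H; auto.
Qed.

Lemma fresh_aeq_b : forall D t t' a, aeq D t t' -> fresh D a t' -> fresh D a t.
Proof. intros. eapply fresh_aeq; eauto using aeq_sym. Qed.

Lemma aeq_ds : forall D t p q, (forall c, patom p c <> patom q c -> fresh D c t) ->
  aeq D (pact p t) (pact q t).
Proof.
  intros D t; induction t using term_ind'; intros p0 q Hds; simpl.
  - constructor. induction H; simpl; constructor.
    + apply H. intros c Hc. specialize (Hds c Hc). rewrite fresh_app in Hds. inversion Hds; auto.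
    + apply IHForall. intros c Hc. specialize (Hds c Hc). rewrite fresh_app in *. inversion Hds; auto.
  - destruct (atom_eq_dec (patom p0 a) (patom q a)) as [E|E].
    + rewrite E; constructor.
    + specialize (Hds a E). simpl in Hds. congruence.
  - destruct (atom_eq_dec (patom p0 a) (patom q a)) as [E|E].
    + rewrite E; constructor. apply IHt. intros c Hc.
      destruct (Hds c Hc) as [E2|[_ E2]]; auto. subst; congruence.
    + apply aeq_abs_diff; auto.
      * rewrite pact_app. apply IHt. intros c Hc.
        assert (c <> a).
        { intro; subst. rewrite patom_app, patom_one, swap_r in Hc. congruence. }
        assert (patom p0 c <> patom q c).
        { intro E3. apply Hc. rewrite patom_app, patom_one. rewrite swap_o; auto.
          - intro E4. apply H. apply (patom_inj p0). congruence.
          - intro E4. apply H. apply (patom_inj q). congruence. }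
        destruct (Hds c H0) as [E2|[_ E2]]; [congruence|auto].
      * rewrite fresh_pact. unfold pinv.
        set (b := patom (rev q) (patom p0 a)).
        assert (Hb : patom q b = patom p0 a) by (unfold b; apply patom_inv_r).
        assert (b <> a) by (intro Eb; rewrite Eb in Hb; congruence).
        assert (patom p0 b <> patom q b).
        { rewrite Hb. intro E3. apply patom_inj in E3. congruence. }
        destruct (Hds b H0) as [E2|[_ E2]]; [congruence|auto].
  - constructor. intros c Hc. rewrite !patom_app in Hc.
    specialize (Hds _ Hc). simpl in Hds. unfold pinv in Hds. rewrite patom_inv_l in Hds. auto.
Qed.

Fixpoint size (t : term) : nat :=
  match t with
  | App f ts => S ((fix sz (l : list term) : nat :=
                      match l with [] => 0 | u :: l' => size u + sz l' end) ts)
  | At _ => 1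
  | Abs _ u => S (size u)
  | Susp _ _ => 1
  end.

Lemma size_pact : forall p t, size (pact p t) = size t.
Proof.
  intros p t; induction t using term_ind'; simpl; auto.
  f_equal. induction H; simpl; auto.
Qed.

Lemma size_in : forall f ts u, In u ts -> size u < size (App f ts).
Proof.
  intros f ts u H. simpl. induction ts; simpl in *; [contradiction|].
  destruct H; subst; [lia|]. specialize (IHts H). lia.
Qed.

Lemma Forall2_trans3 : forall {A} (R1 R2 R3 : A -> A -> Prop) l1 l2 l3,
  Forall2 R1 l1 l2 -> Forall2 R2 l2 l3 ->
  (forall x y z, In x l1 -> R1 x y -> R2 y z -> R3 x z) -> Forall2 R3 l1 l3.
Proof.
  intros A R1 R2 R3 l1 l2 l3 H; revert l3; induction H; intros l3 H' Hr; inversion H'; subst; constructor.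
  - eapply Hr; eauto. left; auto.
  - apply IHForall2; auto. intros; eapply Hr; eauto. right; auto.
Qed.

Lemma aeq_trans_n : forall D n t, size t < n -> forall t' t'', aeq D t t' -> aeq D t' t'' -> aeq D t t''.
Proof.
  intros D n; induction n; intros t Hs t' t'' H1 H2; [lia|].
  destruct H1.
  - exact H2.
  - inversion H2; subst.
    + constructor. eapply IHn; eauto. simpl in Hs; lia.
    + apply aeq_abs_diff; auto. eapply IHn; eauto. simpl in Hs; lia.
  - inversion H2; subst.
    + apply aeq_abs_diff; auto.
      * eapply IHn; [| exact H1 | apply aeq_equiv; eauto]. simpl in Hs; lia.
      * eapply fresh_aeq; eauto.
    + rename a'0 into c, t'0 into u''.
      pose proof (aeq_equiv _ _ _ H6 [(a, a')]) as E. rewrite pact_app in E.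
      assert (Hu : aeq D t (pact ([(a, a')] ++ [(a', c)]) u'')).
      { eapply IHn; [| exact H1 | exact E]. simpl in Hs; lia. }
      destruct (atom_eq_dec a c) as [Eac|Eac].
      * subst c. constructor. rewrite <- (pact_nil u''). eapply aeq_peq_r; [exact Hu|reflexivity|].
        intro x. simpl app. rewrite patom_cons, patom_one, swap_sym, swap_inv. reflexivity.
      * assert (Fa : fresh D a u'').
        { pose proof (fresh_aeq _ _ _ H6 a H0) as F. rewrite fresh_swap in F.
          rewrite swap_o in F; auto. }
        apply aeq_abs_diff; auto.
        eapply IHn; [| exact Hu |]. simpl in Hs; lia.
        apply aeq_ds. intros x Hx.
        destruct (atom_eq_dec x a); [subst; auto|].
        destruct (atom_eq_dec x a'); [subst; auto|].
        exfalso; apply Hx. simpl app. rewrite patom_cons, !patom_one.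
        destruct (atom_eq_dec x c).
        { subst. rewrite swap_r, swap_r, swap_r. reflexivity. }
        rewrite !(swap_o _ _ x); auto.
  - inversion H2; subst. constructor. intros c Hc.
    destruct (atom_eq_dec (patom p c) (patom p' c)); auto.
    apply H4. congruence.
  - inversion H2; subst. constructor. eapply Forall2_trans3; eauto.
    intros x y z Hx Hxy Hyz. eapply IHn; eauto.
    pose proof (size_in f ts x Hx). lia.
Qed.

Lemma aeq_trans : forall D t t' t'', aeq D t t' -> aeq D t' t'' -> aeq D t t''.
Proof. intros. eapply aeq_trans_n; eauto. Qed.

Lemma apply_pact : forall th p u, apply_subst th (pact p u) = pact p (apply_subst th u).
Proof.
  intros th p u; induction u using term_ind'; simpl; auto.
  - f_equal. rewrite !map_map. induction H; simpl; auto. rewrite H, IHForall; auto.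
  - rewrite IHu; auto.
  - rewrite pact_app; auto.
Qed.

Lemma apply_compose : forall th sg u, apply_subst th (apply_subst sg u) = apply_subst (compose sg th) u.
Proof.
  intros th sg u; induction u using term_ind'; simpl; auto.
  - f_equal. rewrite !map_map. induction H; simpl; auto. rewrite H, IHForall; auto.
  - rewrite IHu; auto.
  - rewrite apply_pact; auto.
Qed.

Lemma compose_single : forall X v th Z,
  compose (single X v) th Z = if var_eq_dec Z X then apply_subst th v else th Z.
Proof.
  intros. unfold compose, single. destruct (var_eq_dec Z X); auto. simpl. apply pact_nil.
Qed.

Lemma fresh_not_free : forall D a t, fresh D a t -> ~ In a (free_atoms_ns t).
Proof.
  intros D a t; induction t using term_ind'; intros Hf Hin.
  - rewrite fresh_app in Hf. simpl in Hin. apply in_concat in Hin. destruct Hin as [l [Hl Ha]].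
    apply in_map_iff in Hl. destruct Hl as [u [Eu Hu]]; subst.
    rewrite Forall_forall in *. eapply H; eauto.
  - simpl in *. destruct Hin; auto.
  - simpl in *. apply filter_In in Hin. destruct Hin as [Hin E].
    destruct (atom_eq_dec a0 a); [discriminate|].
    destruct Hf as [Hf|[_ Hf]]; [congruence|]. eapply IHt; eauto.
  - auto.
Qed.

Lemma fc1_app : forall a f ts d1 d2, fc1 a (App f ts) = Some d1 -> (forall u, In u ts -> False) -> d1 = d2 -> True.
Proof. auto. Qed.

Lemma fresh_fc1 : forall D a t, fresh D a t -> exists d, fc1 a t = Some d /\ incl d D.
Proof.
  intros D a t; induction t using term_ind'; intros Hf.
  - rewrite fresh_app in Hf. induction H as [|u l Hu Hl IH].
    + exists []; split; [reflexivity| intros x []].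
    + inversion Hf; subst. destruct (Hu H1) as [d1 [E1 I1]]. destruct (IH H2) as [d2 [E2 I2]].
      exists (d1 ++ d2). split.
      * change (fc1 a (App f l) = Some d2) in E2. simpl. rewrite E1. simpl in E2. rewrite E2. reflexivity.
      * apply incl_app; auto.
  - simpl in *. destruct (atom_eq_dec a a0); [congruence|]. exists []; split; auto. intros x [].
  - simpl in *. destruct (atom_eq_dec a a0).
    + exists []; split; auto. intros x [].
    + destruct Hf as [|[_ Hf]]; [congruence|]. auto.
  - simpl in *. exists [(patom (pinv p) a, X)]. split; auto. intros x [E|[]]; subst; auto.
Qed.

Lemma FC_in : forall F G x, FC F = Some G -> In x G ->
  exists a u d, In (a, u) F /\ fc1 a u = Some d /\ In x d.
Proof.
  induction F as [|[a u] F IH]; intros G x E Hx; simpl in E.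
  - injection E; intros; subst; contradiction.
  - destruct (fc1 a u) eqn:E1; [|discriminate]. destruct (FC F) eqn:E2; [|discriminate].
    injection E; intros; subst. apply in_app_or in Hx. destruct Hx.
    + exists a, u, f. split; auto. left; auto.
    + destruct (IH _ _ eq_refl H) as [a' [u' [d [H1 [H2 H3]]]]]. exists a', u', d; split; auto. right; auto.
Qed.

Lemma FC_ok : forall D F, (forall a u, In (a, u) F -> exists d, fc1 a u = Some d /\ incl d D) ->
  exists G, FC F = Some G /\ incl G D.
Proof.
  intros D; induction F as [|[a u] F IH]; intros H; simpl.
  - exists []; split; auto. intros x [].
  - destruct (H a u (or_introl eq_refl)) as [d [E1 I1]]. rewrite E1.
    destruct IH as [G [E2 I2]]. { intros; apply H; right; auto. }
    rewrite E2. exists (d ++ G); split; auto. apply incl_app; auto.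
Qed.

Lemma patom_sort : forall p a, perm_ok p = true -> asrt (patom p a) = asrt a.
Proof.
  induction p as [|[x y] p IH]; intros a H; simpl; auto.
  simpl in H. apply andb_prop in H. destruct H as [H1 H2]. apply PeanoNat.Nat.eqb_eq in H1.
  unfold swap_atom. destruct (atom_eq_dec (patom p a) x).
  - rewrite <- IH with (a := a); auto. rewrite e. auto.
  - destruct (atom_eq_dec (patom p a) y).
    + rewrite <- IH with (a := a); auto. rewrite e. auto.
    + auto.
Qed.

Lemma wsort_pact : forall p t, perm_ok p = true -> wsort (pact p t) = wsort t.
Proof.
  intros p t Hp; induction t using term_ind'; simpl.
  - rewrite map_map. replace (map (fun x => wsort (pact p x)) ts) with (map wsort ts); auto.
    apply map_ext_in. intros. rewrite Forall_forall in H. rewrite H; auto.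
  - rewrite patom_sort; auto.
  - rewrite IHt, patom_sort; auto.
  - unfold perm_ok in *. rewrite forallb_app. rewrite Hp. simpl. auto.
Qed.

Lemma sorts_match_spec : forall l ds, sorts_match l ds = true -> Forall2 (fun o d => o = Some d) l ds.
Proof.
  induction l as [|o l IH]; intros ds H.
  - destruct ds; simpl in H; try discriminate; constructor.
  - destruct ds as [|d ds]; destruct o as [o|]; simpl in H; try discriminate.
    destruct (sort_eq_dec o d); [|discriminate]. subst. constructor; auto.
Qed.

Lemma patom_in : forall p a, In (patom p a) (a :: perm_atoms p).
Proof.
  induction p as [|[x y] p IH]; intros a; simpl; auto.
  unfold swap_atom. destruct (atom_eq_dec (patom p a) x); [simpl; auto|].
  destruct (atom_eq_dec (patom p a) y); [simpl; auto|].
  destruct (IH a); [left; auto|right; right; right; auto].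
Qed.

Lemma perm_atoms_app : forall p q, perm_atoms (p ++ q) = perm_atoms p ++ perm_atoms q.
Proof. intros; unfold perm_atoms; apply flat_map_app. Qed.

Lemma perm_atoms_rev : forall p x, In x (perm_atoms (rev p)) -> In x (perm_atoms p).
Proof.
  induction p as [|[a b] p IH]; intros x H; simpl in *; auto.
  rewrite perm_atoms_app in H. apply in_app_or in H. destruct H as [H|H].
  - right; right; auto.
  - simpl in H. destruct H as [H|[H|[]]]; auto.
Qed.

Lemma atoms_pact : forall p t x, In x (atoms (pact p t)) -> In x (perm_atoms p ++ atoms t).
Proof.
  intros p t; induction t using term_ind'; intros x Hx; simpl in *.
  - apply in_concat in Hx. destruct Hx as [l [Hl Hx]]. apply in_map_iff in Hl.
    destruct Hl as [u [E Hu]]; subst. apply in_map_iff in Hu. destruct Hu as [v [E Hv]]; subst.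
    rewrite Forall_forall in H. apply H in Hx; auto. apply in_app_or in Hx. apply in_or_app.
    destruct Hx; auto. right. apply in_concat. exists (atoms v); split; auto. apply in_map; auto.
  - destruct Hx as [E|[]]; subst. destruct (patom_in p a) as [E|E]; apply in_or_app; [right; left|left]; auto.
  - destruct Hx as [E|Hx].
    + subst. destruct (patom_in p a) as [E|E]; apply in_or_app; [right; left|left]; auto.
    + apply IHt in Hx. apply in_app_or in Hx. apply in_or_app. destruct Hx; [left|right; right]; auto.
  - rewrite perm_atoms_app in Hx. auto.
Qed.

Lemma atoms_apply_single : forall X v u x, In x (atoms (apply_subst (single X v) u)) -> In x (atoms u ++ atoms v).
Proof.
  intros X v u; induction u using term_ind'; intros x Hx; simpl in *.
  - apply in_concat in Hx. destruct Hx as [l [Hl Hx]]. apply in_map_iff in Hl.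
    destruct Hl as [w [E Hw]]; subst. apply in_map_iff in Hw. destruct Hw as [y [E Hy]]; subst.
    rewrite Forall_forall in H. apply H in Hx; auto. apply in_app_or in Hx. apply in_or_app.
    destruct Hx; auto. left. apply in_concat. exists (atoms y); split; auto. apply in_map; auto.
  - tauto.
  - destruct Hx as [E|Hx]; [left; auto|right; auto].
  - apply atoms_pact in Hx. unfold single in Hx. destruct (var_eq_dec X0 X).
    + apply in_app_or in Hx. apply in_or_app. destruct Hx; auto.
    + simpl in Hx. apply in_app_or in Hx. apply in_or_app. destruct Hx as [H|[]]; auto.
Qed.

Definition side (b : bool) (t s : term) : term := if b then t else s.

Definition FunL (L : list aut) : Prop :=
  forall Z t s t' s', In (Z, t, s) L -> In (Z, t', s') L -> t = t' /\ s = s'.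

Lemma in_aut_vars : forall L Z t s, In (Z, t, s) L -> In Z (aut_vars L).
Proof.
  intros. unfold aut_vars. apply in_flat_map. exists (Z, t, s). split; auto. left; auto.
Qed.

Lemma mk_in : forall Ys ts ss Y t s, In (Y, t, s) (mk_auts Ys ts ss) -> In Y Ys /\ In t ts /\ In s ss.
Proof.
  induction Ys as [|Y0 Ys IH]; intros ts ss Y t s H; [contradiction|].
  destruct ts as [|t0 ts]; [contradiction|]. destruct ss as [|s0 ss]; [contradiction|].
  simpl in H. destruct H as [E|H].
  - injection E; intros; subst. simpl; auto.
  - destruct (IH _ _ _ _ _ H) as [H1 [H2 H3]]. simpl; auto.
Qed.

Lemma mk_fun : forall Ys ts ss, NoDup Ys -> FunL (mk_auts Ys ts ss).
Proof.
  induction Ys as [|Y0 Ys IH]; intros ts ss ND Z t s t' s' H1 H2; [contradiction|].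
  destruct ts as [|t0 ts]; [contradiction|]. destruct ss as [|s0 ss]; [contradiction|].
  inversion ND; subst.
  simpl in H1, H2. destruct H1 as [E1|H1]; destruct H2 as [E2|H2].
  - injection E1; injection E2; intros; subst; auto.
  - injection E1; intros; subst. apply mk_in in H2. tauto.
  - injection E2; intros; subst. apply mk_in in H1. tauto.
  - eapply IH; eauto.
Qed.

Lemma mk_F2_t : forall (R : Var -> term -> Prop) Ys ts ss, length Ys = length ts -> length ts = length ss ->
  (forall Y t s, In (Y, t, s) (mk_auts Ys ts ss) -> R Y t) -> Forall2 R Ys ts.
Proof.
  induction Ys as [|Y0 Ys IH]; intros ts ss L1 L2 H; destruct ts as [|t0 ts]; destruct ss as [|s0 ss];
    simpl in *; try discriminate; constructor.
  - eapply H; left; eauto.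
  - eapply IH with (ss := ss); auto. intros; eapply H; right; eauto.
Qed.

Lemma mk_F2_s : forall (R : Var -> term -> Prop) Ys ts ss, length Ys = length ts -> length ts = length ss ->
  (forall Y t s, In (Y, t, s) (mk_auts Ys ts ss) -> R Y s) -> Forall2 R Ys ss.
Proof.
  induction Ys as [|Y0 Ys IH]; intros ts ss L1 L2 H; destruct ts as [|t0 ts]; destruct ss as [|s0 ss];
    simpl in *; try discriminate; constructor.
  - eapply H; left; eauto.
  - eapply IH with (ts := ts); auto. intros; eapply H; right; eauto.
Qed.

Lemma mk_sorts : forall Ys ts ss ds Y t s, In (Y, t, s) (mk_auts Ys ts ss) ->
  Forall2 (fun Y t => wsort t = Some (vsrt Y)) Ys ts ->
  Forall2 (fun o d => o = Some d) (map wsort ts) ds ->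
  Forall2 (fun o d => o = Some d) (map wsort ss) ds ->
  wsort t = Some (vsrt Y) /\ wsort s = Some (vsrt Y).
Proof.
  induction Ys as [|Y0 Ys IH]; intros ts ss ds Y t s H F1 F2 F3; [contradiction|].
  destruct ts as [|t0 ts]; [contradiction|]. destruct ss as [|s0 ss]; [contradiction|].
  inversion F1; subst. inversion F2; subst. inversion F3; subst.
  simpl in H. destruct H as [E|H].
  - injection E; intros; subst. split; congruence.
  - eapply IH; eauto.
Qed.

Lemma F2_map_l : forall (R : term -> term -> Prop) (g : Var -> term) Ys ts,
  Forall2 (fun Y t => R (g Y) t) Ys ts -> Forall2 R (map g Ys) ts.
Proof. intros; induction H; simpl; constructor; auto. Qed.

Lemma atoms_susps : forall f Ys x, ~ In x (atoms (App f (map (fun Y => Susp [] Y) Ys))).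
Proof. intros f Ys x H. simpl in H. rewrite map_map in H. induction Ys; simpl in *; auto. Qed.

Lemma swap_same : forall a x, swap_atom (a, a) x = x.
Proof. intros; unfold swap_atom; destruct (atom_eq_dec x a); subst; auto. Qed.

Lemma abs_fix : forall D c a t u, fresh D c (Abs a t) -> aeq D u (pact [(c, a)] t) -> aeq D (Abs c u) (Abs a t).
Proof.
  intros D c a t u Hf H. destruct (atom_eq_dec c a).
  - subst. constructor. rewrite <- (pact_nil t). eapply aeq_peq_r; [exact H|reflexivity|].
    intro x. rewrite patom_one, swap_same. reflexivity.
  - apply aeq_abs_diff; auto. destruct Hf as [|[_ Hf]]; [congruence|auto].
Qed.

Section Alg.
Variables (A : list Atom) (nabla : fctx) (t0 s0 : term) (X0 : Var) (U : list Var).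

Definition Inv (b : bool) (st : state) : Prop :=
  forall th, (forall Z t s, In (Z, t, s) (stP st ++ stS st) -> aeq nabla (th Z) (side b t s)) ->
  aeq nabla (apply_subst th (stsig st X0)) (side b t0 s0).

Definition Good (st : state) : Prop :=
  FunL (stP st ++ stS st) /\
  (forall Z t s, In (Z, t, s) (stP st ++ stS st) ->
     wsort t = Some (vsrt Z) /\ wsort s = Some (vsrt Z) /\ term_based A t /\ term_based A s) /\
  (forall a Z, In (a, Z) (stG st) -> In a A /\
     exists t s, In (Z, t, s) (stS st) /\ fresh nabla a t /\ fresh nabla a s) /\
  term_based A (stsig st X0) /\ Inv true st /\ Inv false st.

Lemma Q_lift : forall b (L L' : list aut) X tX sX v th,
  FunL L -> In (X, tX, sX) L ->
  (forall Z t s, In (Z, t, s) L -> Z <> X -> In (Z, t, s) L') ->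
  aeq nabla (apply_subst th v) (side b tX sX) ->
  (forall Z t s, In (Z, t, s) L' -> aeq nabla (th Z) (side b t s)) ->
  forall Z t s, In (Z, t, s) L -> aeq nabla (compose (single X v) th Z) (side b t s).
Proof.
  intros b L L' X tX sX v th HF HX Hsub Hv HL' Z t s HZ.
  rewrite compose_single. destruct (var_eq_dec Z X).
  - subst. destruct (HF _ _ _ _ _ HZ HX); subst; auto.
  - apply HL'. apply Hsub; auto.
Qed.

Lemma Inv_compose : forall b P S G sg P' S' G' X v,
  (forall th, (forall Z t s, In (Z, t, s) (P' ++ S') -> aeq nabla (th Z) (side b t s)) ->
     forall Z t s, In (Z, t, s) (P ++ S) -> aeq nabla (compose (single X v) th Z) (side b t s)) ->
  Inv b (mkState P S G sg) -> Inv b (mkState P' S' G' (compose sg (single X v))).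
Proof.
  intros b P S G sg P' S' G' X v H HI th Hth. simpl.
  unfold compose at 1. rewrite apply_compose. apply HI. simpl. apply H; auto.
Qed.


Lemma perm_mem1 : forall {T} (P P' S : list T) x e, Permutation P (x :: P') -> In e (P ++ S) -> e = x \/ In e (P' ++ S).
Proof.
  intros. apply in_app_or in H0. destruct H0.
  - apply (Permutation_in _ H) in H0. destruct H0; auto. right; apply in_or_app; auto.
  - right; apply in_or_app; auto.
Qed.
Lemma perm_mem2 : forall {T} (P P' S : list T) x e, Permutation P (x :: P') -> In e (P' ++ S) -> In e (P ++ S).
Proof.
  intros. apply in_app_or in H0. apply in_or_app. destruct H0; auto.
  left. eapply Permutation_in; [apply Permutation_sym; eauto|]. right; auto.
Qed.
Lemma perm_mem3 : forall {T} (P P' S : list T) x, Permutation P (x :: P') -> In x (P ++ S).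
Proof.
  intros. apply in_or_app. left. eapply Permutation_in; [apply Permutation_sym; eauto|]. left; auto.
Qed.

Lemma atoms_sub_app : forall f ts t x, In t ts -> In x (atoms t) -> In x (atoms (App f ts)).
Proof. intros. simpl. apply in_concat. exists (atoms t). split; auto. apply in_map; auto. Qed.

Lemma step_good : forall st st', step A nabla U X0 st st' -> Good st -> Good st'.
Proof.
  intros st st' Hs; destruct Hs; intros [HF [HS [HG [HB [HI1 HI2]]]]]; simpl in *.
  -
    set (eX := (X, App f ts, App f ss)).
    assert (HX : In eX (P ++ S)) by (eapply perm_mem3; eauto).
    destruct (HS _ _ _ HX) as [W1 [W2 [B1 B2]]].
    simpl in W1, W2.
    destruct (sorts_match (map wsort ts) (fdom f)) eqn:M1; [|discriminate].
    destruct (sorts_match (map wsort ss) (fdom f)) eqn:M2; [|discriminate].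
    apply sorts_match_spec in M1. apply sorts_match_spec in M2.
    assert (HFr : forall Y, In Y Ys -> ~ In Y (aut_vars (P ++ S))).
    { intros Y HY. rewrite Forall_forall in H3. destruct (H3 Y HY) as [_ [Hn _]]. exact Hn. }
    assert (Hold : forall Z t s, In (Z, t, s) ((mk_auts Ys ts ss ++ P') ++ S) ->
              In (Z, t, s) (mk_auts Ys ts ss) \/ In (Z, t, s) (P ++ S)).
    { intros Z t s Hin. rewrite <- app_assoc in Hin. apply in_app_or in Hin. destruct Hin; auto.
      right. eapply perm_mem2; eauto. }
    assert (HInv : forall b, Inv b (mkState P S G sg) ->
              Inv b (mkState (mk_auts Ys ts ss ++ P') S G (compose sg (single X (App f (map (fun Y => Susp [] Y) Ys)))))).
    { intros b HI. eapply Inv_compose; [|exact HI]. intros th Hth.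
      eapply Q_lift with (L' := (mk_auts Ys ts ss ++ P') ++ S); eauto.
      - intros Z t s Hin HZ. destruct (perm_mem1 _ _ _ _ _ H Hin) as [E|E].
        + unfold eX in E. injection E; intros; subst; congruence.
        + rewrite <- app_assoc. apply in_or_app; right; auto.
      - simpl. rewrite map_map. destruct b; simpl; constructor; apply F2_map_l.
        + eapply mk_F2_t with (ss := ss); eauto. intros Y t s Hin. simpl. rewrite pact_nil.
          apply (Hth Y t s). apply in_or_app; left; apply in_or_app; left; auto.
        + eapply mk_F2_s with (ts := ts); eauto. intros Y t s Hin. simpl. rewrite pact_nil.
          apply (Hth Y t s). apply in_or_app; left; apply in_or_app; left; auto. }
    split; [|split; [|split; [|split; [|split]]]]; auto.
    + intros Z t s t' s' I1 I2. apply Hold in I1. apply Hold in I2.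
      destruct I1 as [I1|I1]; destruct I2 as [I2|I2].
      * eapply mk_fun; eauto.
      * exfalso. apply mk_in in I1. destruct I1 as [I1 _]. apply (HFr Z I1). eapply in_aut_vars; eauto.
      * exfalso. apply mk_in in I2. destruct I2 as [I2 _]. apply (HFr Z I2). eapply in_aut_vars; eauto.
      * eapply HF; eauto.
    + intros Z t s Hin. apply Hold in Hin. destruct Hin as [Hin|Hin]; [|apply HS; auto].
      destruct (mk_sorts _ _ _ _ _ _ _ Hin H4 M1 M2) as [S1 S2].
      apply mk_in in Hin. destruct Hin as [_ [T1 T2]].
      repeat split; auto; intros x Hx; [apply B1|apply B2]; eapply atoms_sub_app; eauto.
    + intros x Hx. unfold compose in Hx. apply atoms_apply_single in Hx. apply in_app_or in Hx.
      destruct Hx as [Hx|Hx]; [apply HB; auto|]. exfalso; eapply atoms_susps; eauto.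
  -
    set (eX := (X, At a, At a)).
    assert (HX : In eX (P ++ S)) by (eapply perm_mem3; eauto).
    destruct (HS _ _ _ HX) as [W1 [W2 [B1 B2]]].
    assert (HInv : forall b, Inv b (mkState P S G sg) ->
              Inv b (mkState P' S G (compose sg (single X (At a))))).
    { intros b HI. eapply Inv_compose; [|exact HI]. intros th Hth.
      eapply Q_lift with (L' := P' ++ S); eauto.
      - intros Z t s Hin HZ. destruct (perm_mem1 _ _ _ _ _ H Hin) as [E|E]; auto.
        unfold eX in E. injection E; intros; subst; congruence.
      - destruct b; simpl; constructor. }
    split; [|split; [|split; [|split; [|split]]]]; auto.
    + intros Z t s t' s' I1 I2. eapply HF; eapply perm_mem2; eauto.
    + intros Z t s Hin. apply HS. eapply perm_mem2; eauto.
    + intros x Hx. unfold compose in Hx. apply atoms_apply_single in Hx. apply in_app_or in Hx.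
      destruct Hx as [Hx|Hx]; [apply HB; auto|]. apply B1. auto.
  -
    set (eX := (X, Abs a t, Abs b s)).
    set (eY := (Y, pact [(c, a)] t, pact [(c, b)] s)).
    assert (HX : In eX (P ++ S)) by (eapply perm_mem3; eauto).
    destruct (HS _ _ _ HX) as [W1 [W2 [B1 B2]]].
    destruct H1 as [_ [HFr _]]. simpl in HFr.
    assert (Hold : forall e, In e ((eY :: P') ++ S) -> e = eY \/ In e (P ++ S)).
    { intros e Hin. simpl in Hin. destruct Hin; auto. right. eapply perm_mem2; eauto. }
    assert (HInv : forall b0, Inv b0 (mkState P S G sg) ->
              Inv b0 (mkState (eY :: P') S G (compose sg (single X (Abs c (Susp [] Y)))))).
    { intros b0 HI. eapply Inv_compose; [|exact HI]. intros th Hth.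
      eapply Q_lift with (L' := (eY :: P') ++ S); eauto.
      - intros Z t' s' Hin HZ. destruct (perm_mem1 _ _ _ _ _ H Hin) as [E|E].
        + unfold eX in E. injection E; intros; subst; congruence.
        + right; auto.
      - simpl. rewrite pact_nil. destruct H0 as [_ [_ [_ [F1 F2]]]].
        destruct b0; simpl; apply abs_fix; auto.
        + apply (Hth Y _ (pact [(c, b)] s)). left; auto.
        + apply (Hth Y (pact [(c, a)] t) _). left; auto. }
    destruct H0 as [HcA [Sa [Sb [F1 F2]]]].
    split; [|split; [|split; [|split; [|split]]]]; auto.
    + intros Z t' s' t'' s'' I1 I2. apply Hold in I1. apply Hold in I2.
      destruct I1 as [I1|I1]; destruct I2 as [I2|I2].
      * unfold eY in *. rewrite <- I1 in I2. injection I2; intros; subst; auto.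
      * exfalso. unfold eY in I1. injection I1; intros; subst. apply HFr. eapply in_aut_vars; eauto.
      * exfalso. unfold eY in I2. injection I2; intros; subst. apply HFr. eapply in_aut_vars; eauto.
      * eapply HF; eauto.
    + intros Z t' s' Hin. apply Hold in Hin. destruct Hin as [Hin|Hin]; [|apply HS; auto].
      unfold eY in Hin. injection Hin; intros; subst.
      assert (Hpb : perm_ok [(c, b)] = true) by (unfold perm_ok; simpl; rewrite Sb, PeanoNat.Nat.eqb_refl; auto).
      assert (Hpa : perm_ok [(c, a)] = true) by (unfold perm_ok; simpl; rewrite Sa, PeanoNat.Nat.eqb_refl; auto).
      rewrite wsort_pact in H2 by auto.
      split; [rewrite wsort_pact; auto|split; [|split]].
      * rewrite wsort_pact by auto. simpl in W1, W2.
        destruct (wsort t) eqn:E1; [|discriminate]. destruct (wsort s) eqn:E2; [|discriminate].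
        injection W1; injection W2; intros E3 E4. rewrite <- E4 in E3. injection E3; intros; subst. congruence.
      * intros x Hx. apply atoms_pact in Hx. simpl in Hx. destruct Hx as [E|[E|Hx]]; subst; auto.
        apply B1; left; auto. apply B1; right; auto.
      * intros x Hx. apply atoms_pact in Hx. simpl in Hx. destruct Hx as [E|[E|Hx]]; subst; auto.
        apply B2; left; auto. apply B2; right; auto.
    + intros x Hx. unfold compose in Hx. apply atoms_apply_single in Hx. apply in_app_or in Hx.
      destruct Hx as [Hx|Hx]; [apply HB; auto|]. simpl in Hx. destruct Hx as [E|[]]; subst; auto.
  -
    assert (Heq : forall e, In e (P' ++ S ++ [(X, t, s)]) <-> In e (P ++ S)).
    { intros e; split; intro Hin.
      - rewrite app_assoc in Hin. apply in_app_or in Hin. destruct Hin as [Hin|[E|[]]].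
        + eapply perm_mem2; eauto.
        + subst. eapply perm_mem3; eauto.
      - destruct (perm_mem1 _ _ _ _ _ H Hin) as [E|E].
        + subst. apply in_or_app; right; apply in_or_app; right; left; auto.
        + apply in_app_or in E. apply in_or_app. destruct E; [left|right; apply in_or_app; left]; auto. }
    split; [|split; [|split; [|split; [|split]]]]; auto.
    + intros Z t' s' t'' s'' I1 I2. eapply HF; apply Heq; eauto.
    + intros Z t' s' Hin. apply HS. apply Heq; auto.
    + intros a Z Hin. apply in_app_or in Hin. destruct Hin as [Hin|Hin].
      * destruct (HG _ _ Hin) as [HA [t' [s' [H5 H6]]]]. split; auto. exists t', s'; split; auto.
        apply in_or_app; left; auto.
      * apply H1 in Hin. destruct Hin as [E [HA [F1 F2]]]; subst. split; auto.
        exists t, s. split; auto. apply in_or_app; right; left; auto.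
    + intros th Hth. apply HI1. intros; apply Hth. apply Heq; auto.
    + intros th Hth. apply HI2. intros; apply Hth. apply Heq; auto.
  -
    set (eX := (X, t1, s1)). set (eY := (Y, t2, s2)).
    assert (HSm : forall e, In e S -> e = eX \/ e = eY \/ In e S').
    { intros e Hin. apply (Permutation_in _ H) in Hin. simpl in Hin. unfold eX, eY; destruct Hin as [E|[E|E]]; auto. }
    assert (HX : In eX (P ++ S)).
    { apply in_or_app; right. eapply Permutation_in; [apply Permutation_sym; eauto|]. left; auto. }
    assert (HY : In eY (P ++ S)).
    { apply in_or_app; right. eapply Permutation_in; [apply Permutation_sym; eauto|]. right; left; auto. }
    assert (Hsub : forall e, In e (P ++ eX :: S') -> In e (P ++ S)).
    { intros e Hin. apply in_app_or in Hin. apply in_or_app. destruct Hin; auto. right.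
      eapply Permutation_in; [apply Permutation_sym; eauto|]. destruct H5; [left; auto|right; right; auto]. }
    destruct (HS _ _ _ HX) as [W1 [W2 [B1 B2]]].
    destruct (HS _ _ _ HY) as [W3 [W4 [B3 B4]]].
    assert (HpiA : forall x, In x (perm_atoms pi) -> In x A).
    { intros x Hx. apply H1 in Hx. repeat (apply in_app_or in Hx; destruct Hx as [Hx|Hx]); auto. }
    assert (HInv : forall b0, Inv b0 (mkState P S G sg) ->
              Inv b0 (mkState P (eX :: S') G' (compose sg (single Y (Susp pi X))))).
    { intros b0 HI. eapply Inv_compose; [|exact HI]. intros th Hth.
      eapply Q_lift with (L' := P ++ eX :: S'); eauto.
      - intros Z t' s' Hin HZ. apply in_app_or in Hin. apply in_or_app. destruct Hin as [Hin|Hin]; auto.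
        right. destruct (HSm _ Hin) as [E|[E|E]].
        + left; auto.
        + unfold eY in E. injection E; intros; subst; congruence.
        + right; auto.
      - simpl. assert (Ht : aeq nabla (th X) (side b0 t1 s1)) by (apply Hth; apply in_or_app; right; left; auto).
        destruct b0; simpl in *; (eapply aeq_trans; [apply aeq_equiv; exact Ht|]); auto. }
    split; [|split; [|split; [|split; [|split]]]]; auto.
    + intros Z t' s' t'' s'' I1 I2. eapply HF; apply Hsub; eauto.
    + intros a' Z' Hin. unfold ctx_subst in H4.
      destruct (FC_in _ _ _ H4 Hin) as [a [u [d [Hau [Hfc Hd]]]]].
      apply in_map_iff in Hau. destruct Hau as [[a0 Z0] [E HZ0]]. simpl in E. injection E; intros; subst.
      destruct (HG _ _ HZ0) as [HA [t' [s' [HinS [F1 F2]]]]].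
      unfold single in Hfc. destruct (var_eq_dec Z0 Y).
      * subst Z0. simpl in Hfc. injection Hfc; intros; subst. destruct Hd as [Ed|[]].
        injection Ed; intros; subst.
        assert (HinS' : In (Y, t', s') (P ++ S)) by (apply in_or_app; right; auto).
        destruct (HF _ _ _ _ _ HinS' HY); subst.
        split.
        { destruct (patom_in (pinv pi) a) as [E1|E1]; [rewrite <- E1; auto|].
          apply HpiA. apply perm_atoms_rev. auto. }
        exists t1, s1. split; [left; auto|]. split.
        { rewrite <- fresh_pact. eapply fresh_aeq_b; eauto. }
        { rewrite <- fresh_pact. eapply fresh_aeq_b; eauto. }
      * simpl in Hfc. injection Hfc; intros; subst. destruct Hd as [Ed|[]].
        injection Ed; intros; subst. split; auto.
        exists t', s'. split; auto. destruct (HSm _ HinS) as [Em|[Em|Em]].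
        { rewrite Em; left; auto. }
        { unfold eY in Em. injection Em; intros; subst; congruence. }
        { right; auto. }
    + intros x Hx. unfold compose in Hx. apply atoms_apply_single in Hx. apply in_app_or in Hx.
      destruct Hx as [Hx|Hx]; [apply HB; auto|]. simpl in Hx. auto.
Qed.

End Alg.

Lemma ct_good : forall A nabla t0 s0 X0 U x y,
  clos_trans state (step A nabla U X0) x y -> Good A nabla t0 s0 X0 x -> Good A nabla t0 s0 X0 y.
Proof.
  intros A nabla t0 s0 X0 U x y H. induction H; auto.
  intros; eapply step_good; eauto.
Qed.

Definition rho (S : list aut) (b : bool) (Z : Var) : term :=
  match find (fun e => if var_eq_dec (fst (fst e)) Z then true else false) S with
  | Some (_, t', s') => side b t' s'
  | None => Susp [] Z
  end.

Lemma rho_spec : forall S b Z t s, FunL ([] ++ S) -> In (Z, t, s) S -> rho S b Z = side b t s.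
Proof.
  intros S b Z t s HF Hin. unfold rho.
  match goal with |- context [find ?f S] => destruct (find f S) as [[[Z' t'] s']|] eqn:E end.
  - apply find_some in E. destruct E as [E1 E2]. simpl in E2.
    destruct (var_eq_dec Z' Z); [|discriminate]. subst.
    destruct (HF _ _ _ _ _ E1 Hin); subst; auto.
  - eapply find_none in E; eauto. simpl in E. destruct (var_eq_dec Z Z); congruence.
Qed.

Theorem theorem3 :
  forall (A : list Atom) (nabla : fctx) (t s : term) (srt : sort) (X : Var)
         (S : list aut) (Gamma : fctx) (sigma : subst),
    wsort t = Some srt -> wsort s = Some srt ->
    term_based A t -> term_based A s -> ctx_based A nabla ->
    vsrt X = srt ->
    ~ In X (tvars t ++ tvars s ++ ctx_vars nabla) ->
    clos_trans state
      (step A nabla (X :: tvars t ++ tvars s ++ ctx_vars nabla) X)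
      (mkState [(X, t, s)] [] [] id_subst)
      (mkState [] S Gamma sigma) ->
    A_based_generalization A Gamma (sigma X) nabla t nabla s.
Proof.
  intros A nabla t s srt X S Gamma sigma Ht Hs Bt Bs Bn Hsrt HX Hct.
  assert (G0 : Good A nabla t s X (mkState [(X, t, s)] [] [] id_subst)).
  { unfold Good; simpl. split; [|split; [|split; [|split; [|split]]]].
    - intros Z t1 s1 t2 s2 [E1|[]] [E2|[]]. injection E1; injection E2; intros; subst; auto.
    - intros Z t1 s1 [E1|[]]. injection E1; intros; subst. repeat split; auto; congruence.
    - intros a Z [].
    - intros x [].
    - intros th Hth. simpl. rewrite pact_nil. apply (Hth X t s). left; auto.
    - intros th Hth. simpl. rewrite pact_nil. apply (Hth X t s). left; auto. }
  pose proof (ct_good _ _ _ _ _ _ _ _ Hct G0) as GF.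
  destruct GF as [HF [HS [HG [HB [HI1 HI2]]]]]. simpl in *.
  assert (Hpre : forall b, preceq Gamma (sigma X) nabla (side b t s)).
  { intros b. exists (rho S b). split; [|split; [|split]].
    - intro Z. unfold rho. match goal with |- context [find ?f S] => destruct (find f S) as [[[Z' t'] s']|] eqn:E end.
      + apply find_some in E. destruct E as [E1 E2]. simpl in E2.
        destruct (var_eq_dec Z' Z); [|discriminate]. subst.
        destruct (HS Z t' s' E1) as [W1 [W2 _]]. destruct b; auto.
      + reflexivity.
    - intros a Z Hin. destruct (HG _ _ Hin) as [_ [t' [s' [HinS [F1 F2]]]]].
      rewrite (rho_spec S b Z t' s' HF HinS). apply (fresh_not_free nabla).
      destruct b; auto.
    - unfold ctx_subst. apply FC_ok. intros a u Hin. apply in_map_iff in Hin.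
      destruct Hin as [[a0 Z0] [E Hin]]. simpl in E. injection E; intros; subst.
      destruct (HG _ _ Hin) as [_ [t' [s' [HinS [F1 F2]]]]].
      rewrite (rho_spec S b Z0 t' s' HF HinS). apply fresh_fc1. destruct b; auto.
    - destruct b; [apply HI1|apply HI2]; intros Z t' s' Hin;
        rewrite (rho_spec S _ Z t' s' HF Hin); apply aeq_refl. }
  unfold A_based_generalization. split; [|split; [|split]].
  - intros a Z Hin. apply (HG a Z Hin).
  - exact HB.
  - apply (Hpre true).
  - apply (Hpre false).
Qed.
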